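(* Let $m\ge 1$, $n\ge 0$, let $y_1,\dots,y_m$ be distinct integers each less than $-1$, let $x_1,\dots,x_n$ be distinct integers each greater than $1$, and let $D=\{1,y_1,\dots,y_m,x_1,\dots,x_n\}$. Then $diam(D)=diam(D\cup\{0\})$, and $diam(D)=4$ if $m=1$, $diam(D)=5$ if $m=2$, and $diam(D)=6$ if $m>2$.
   Context: A signed tree is a pair $(T,s)$ where $T$ is a finite tree and $s:E(T)\to\{+,-\}$. The signed degree $sdeg(v)$ of a vertex is the number of incident positive edges minus the number of incident negative edges. $(T,s)$ realizes (satisfies) a set $D$ of integers if $D=\{sdeg(v):v\in V(T)\}$. For a set $D$ containing $1$ or $-1$, $diam(D)=\min\{diam(T): \text{some signed tree }(T,s)\text{ realizes }D\}$, where $diam(T)$ is the diameter of the tree $T$. *)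

(* Defs.v *)
From mathcomp Require Import all_boot all_order all_algebra.
Set Implicit Arguments. Unset Strict Implicit. Unset Printing Implicit Defensive.
Import Order.TTheory GRing.Theory Num.Theory.

Definition is_tree (T : finType) (e : rel T) : Prop :=
  [/\ (exists x : T, True),
      (forall x y, e x y = e y x),
      (forall x, ~~ e x x),
      (forall x y, connect e x y)
    & (forall p : seq T, uniq p -> 3 <= size p -> ~~ cycle e p)].

(* a signing of the edges: s x y = true means the edge xy is positive *)
Definition is_signing (T : finType) (e : rel T) (s : T -> T -> bool) : Prop :=
  forall x y, e x y -> s x y = s y x.

Definition sdeg (T : finType) (e : rel T) (s : T -> T -> bool) (v : T) : int :=
  (#|[pred u | e v u && s v u]|%:Z - #|[pred u | e v u && ~~ s v u]|%:Z)%R.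

Definition realizes (T : finType) (e : rel T) (s : T -> T -> bool)
    (D : int -> Prop) : Prop :=
  (forall v : T, D (sdeg e s v)) /\ (forall d, D d -> exists v : T, sdeg e s v = d).

Definition has_walk (T : finType) (e : rel T) (x y : T) (k : nat) : Prop :=
  exists p : seq T, [/\ path e x p, last x p = y & size p = k].
Definition dist (T : finType) (e : rel T) (x y : T) (k : nat) : Prop :=
  has_walk e x y k /\ (forall j, has_walk e x y j -> k <= j).

Definition tree_diam (T : finType) (e : rel T) (d : nat) : Prop :=
  (exists x y, dist e x y d) /\ (forall x y k, dist e x y k -> k <= d).

Definition diamD (D : int -> Prop) (d : nat) : Prop :=
  (exists (T : finType) (e : rel T) (s : T -> T -> bool),
      [/\ is_tree e, is_signing e s, realizes e s D & tree_diam e d]) /\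
  (forall (T : finType) (e : rel T) (s : T -> T -> bool) (d' : nat),
      is_tree e -> is_signing e s -> realizes e s D -> tree_diam e d' -> d <= d').

(* Main.v *)
Require Import Defs.
From mathcomp Require Import all_boot all_order all_algebra zify.
From Stdlib Require Import Eqdep_dec.
Import Order.TTheory GRing.Theory Num.Theory.
Set Implicit Arguments. Unset Strict Implicit. Unset Printing Implicit Defensive.

Lemma arith1 n : n.+1 + 4 = n + 2 + 3. Proof. lia. Qed.

Lemma int_lt (y : int) : (y < -1)%R -> (y <= -2)%R. Proof. lia. Qed.

Section Gen.
Variables (T : finType) (e : rel T).
Hypothesis esymm : forall x y, e x y = e y x.
Hypothesis eirr : forall x, ~~ e x x.
Hypothesis eacyc : forall p : seq T, uniq p -> 3 <= size p -> ~~ cycle e p.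

Lemma first_common (s t : seq T) : has (mem t) s ->
  exists s1 z s2, [/\ s = s1 ++ z :: s2, z \in t & all (fun w => w \notin t) s1].
Proof.
elim: s => //= a s IH; case: (boolP (a \in t)) => Ha /=.
  by move=> _; exists [::], a, s.
move=> /IH [s1 [z [s2 [-> Hz Hall]]]]; exists (a :: s1), z, s2; split => //=.
by rewrite Ha.
Qed.

Lemma upath_unique p x q : path e x p -> uniq (x :: p) -> path e x q ->
  uniq (x :: q) -> last x p = last x q -> p = q.
Proof.
elim: p x q => [|a p' IH] x [|b q'] //=.
- move=> _ _ _ /andP[Hx _] E; exfalso; move: Hx; rewrite E.
  by rewrite mem_last.
- move=> _ /andP[Hx _] _ _ E; exfalso; move: Hx; rewrite -E.
  by rewrite mem_last.
move=> /andP[exa Hp] /andP[Hxp Up] /andP[exb Hq] /andP[Hxq Uq] El.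
case: (eqVneq a b) => [Eab|Nab].
  subst b; congr (_ :: _); exact: (IH a q' Hp Up Hq Uq El).
have Hhas : has (mem (b :: q')) (a :: p').
  apply/hasP; exists (last a p'); first exact: mem_last.
  by rewrite El; apply: mem_last.
have [s1 [z [s2 [Es Hz Hall]]]] := first_common Hhas.
have [t1 [t2 Et]] : exists t1 t2, b :: q' = t1 ++ z :: t2.
  by case/splitPr: Hz => t1 t2; exists t1, t2.
have Hne : ~~ ((s1 == [::]) && (t1 == [::])).
  apply/negP => /andP[/eqP E1 /eqP E2]; move: Es Et; rewrite E1 E2 /=.
  by move=> [E4 _] [E3 _]; move: Nab; rewrite E4 E3 eqxx.
have Hp2 : path e x (s1 ++ z :: s2) by rewrite -Es /= exa.
have Hq2 : path e x (t1 ++ z :: t2) by rewrite -Et /= exb.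
have Up2 : uniq (x :: s1 ++ z :: s2) by rewrite -Es /= Hxp.
have Uq2 : uniq (x :: t1 ++ z :: t2) by rewrite -Et /= Hxq.
rewrite Et in Hall.
clear -esymm eacyc Hne Hp2 Hq2 Up2 Uq2 Hall.
have HS : 3 <= size (x :: s1 ++ z :: rev t1).
  rewrite /= size_cat /= size_rev.
  move: Hne; rewrite -!size_eq0 negb_and -!lt0n => /orP[H|H];
  by rewrite ltnS addnS ltnS addn_gt0 H ?orbT.
have HC : cycle e (x :: s1 ++ z :: rev t1).
  rewrite /= rcons_cat /= cat_path.
  move: Hp2; rewrite cat_path /= => /and3P[-> -> _] /=.
  have H := rev_path e x (rcons t1 z).
  rewrite last_rcons belast_rcons rev_cons in H; rewrite H.
  have -> : path (fun z0 : T => e^~ z0) x (rcons t1 z) = path e x (rcons t1 z).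
    by apply: eq_path => ? ?; rewrite esymm.
  by move: Hq2; rewrite cat_path /= rcons_path => /and3P[-> -> _].
have HU : uniq (x :: s1 ++ z :: rev t1).
  move: Up2 Uq2 => /= /andP[Hx1 U1] /andP[Hx2 U2].
  move: Hx1 Hx2; rewrite !mem_cat !inE mem_rev !negb_or => /and3P[-> -> _] /and3P[-> _ _] /=.
  move: U1 U2; rewrite !cat_uniq /= rev_uniq mem_rev.
  move=> /and4P[-> /norP[Z1 _] _ _] /and4P[Ut1 /norP[Z2 _] _ _] /=.
  rewrite (negbTE Z1) Z2 Ut1 /= andbT; apply/hasPn => w; rewrite mem_rev => Hw; apply/negP => Hs.
  by move/allP: Hall => /(_ w Hs); rewrite mem_cat Hw.
by move: (eacyc HU HS); rewrite HC.
Qed.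

Lemma dist_upath x p : path e x p -> uniq (x :: p) -> dist e x (last x p) (size p).
Proof.
move=> Hp Up; split; first by exists p.
move=> j [r [Hr Er Sr]]; subst j.
case: (shortenP Hr) Er => p' Hp' Up' Hsub Er.
have -> : p = p' := upath_unique Hp Up Hp' Up' (esym Er).
apply: uniq_leq_size => //; by case/andP: Up'.
Qed.

Lemma sorted_rcons1 (l : seq T) x0 z : sorted e l -> l != [::] -> e (last x0 l) z ->
  sorted e (rcons l z).
Proof. by case: l => //= a l; rewrite rcons_path => -> _ ->. Qed.

Lemma ext_right s u t z : sorted e (s ++ [:: u; t]) -> uniq (s ++ [:: u; t]) ->
  e t z -> z != u -> sorted e (s ++ [:: u; t; z]) && uniq (s ++ [:: u; t; z]).
Proof.
move=> Hs Us Htz Hzu.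
have Hzt : z != t by apply/eqP => E; move: (eirr t); rewrite -{2}E Htz.
have E : s ++ [:: u; t; z] = rcons (s ++ [:: u; t]) z by rewrite rcons_cat.
rewrite E rcons_uniq Us andbT.
apply/andP; split.
  apply: (sorted_rcons1 (x0 := t)) => //; first by rewrite -size_eq0 size_cat addn2.
  by rewrite last_cat.
rewrite mem_cat !inE (negbTE Hzu) (negbTE Hzt) !orbF.
apply/negP => Hz; case/splitPr: Hz Hs Us => s1 s2 Hs Us.
have HS : 3 <= size (z :: s2 ++ [:: u; t]) by rewrite /= size_cat /= addn2.
have HU : uniq (z :: s2 ++ [:: u; t]).
  by move: Us; rewrite -catA cat_cons cat_uniq => /and3P[_ _ ->].
have HC : cycle e (z :: s2 ++ [:: u; t]).
  move: Hs; rewrite -catA cat_cons => /cat_sorted2 [_ /=] H.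
  rewrite /= rcons_cat /= cat_path; move: H; rewrite cat_path => /andP[-> /=]; by rewrite Htz andbT.
by move: (eacyc HU HS); rewrite HC.
Qed.


Variable (s : T -> T -> bool).
Hypothesis hsg : is_signing e s.
Hypothesis hnot1 : forall u, sdeg e s u != (-1)%R.

Lemma neg2 v : (sdeg e s v <= -2)%R ->
  2 + #|[pred u | e v u && s v u]| <= #|[pred u | e v u && ~~ s v u]|.
Proof. rewrite /sdeg; set a := #|_|; set b := #|_|; clearbody a b; lia. Qed.

Lemma neg_nb v t : (sdeg e s v <= -2)%R -> exists u, [&& e v u, ~~ s v u & u != t].
Proof.
move=> /neg2 H.
have : 0 < #|[predD1 [pred u | e v u && ~~ s v u] & t]|.
  move: H; rewrite (cardD1 t [pred u | e v u && ~~ s v u]).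
  move: (t \in _) => c; case: c => /=; set c1 := #|_|; set c2 := #|_|; clearbody c1 c2; lia.
case/card_gt0P => u; rewrite !inE => /andP[Hut /andP[H1 H2]].
by exists u; rewrite H1 H2 Hut.
Qed.

Lemma nonleaf u v : e v u -> ~~ s v u -> exists w, e u w && (w != v).
Proof.
move=> Hvu Hs.
case: (boolP [exists w, e u w && (w != v)]) => [/existsP//|/existsP Hn].
exfalso; move: (hnot1 u); rewrite /sdeg.
have Hw : forall w, e u w -> w = v.
  move=> w Hw; apply/eqP; apply/negPn/negP => Hne; apply: Hn; exists w.
  by rewrite Hw Hne.
have Huv : e u v by rewrite esymm.
have Hsuv : s u v = s v u by apply: hsg.
rewrite (@eq_card0 _ [pred w | e u w && s u w]); last first.
  move=> w; rewrite !inE; apply/negP => /andP[/Hw -> ]; by rewrite Hsuv (negbTE Hs).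
rewrite (@eq_card1 _ v [pred w | e u w && ~~ s u w]) //.
move=> w; rewrite !inE; apply/idP/idP.
  by move=> /andP[/Hw -> _].
by move/eqP ->; rewrite Huv Hsuv Hs.
Qed.

Lemma lb_finish a v rest : (sdeg e s a <= -2)%R ->
  sorted e (a :: v :: rest) -> uniq (a :: v :: rest) ->
  exists x y, dist e x y (size rest + 3).
Proof.
move=> Ha Hs Us.
have [ua /and3P[Haua Hsua Huav]] := neg_nb v Ha.
have [wa /andP[Hua_wa Hwaa]] := nonleaf Haua Hsua.
have ER : rev (a :: v :: rest) = rev rest ++ [:: v; a].
  by rewrite rev_cons rev_cons -cats1 -cats1 -catA.
have HR : sorted e (rev rest ++ [:: v; a]) && uniq (rev rest ++ [:: v; a]).
  rewrite -ER rev_uniq Us andbT rev_sorted.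
  by rewrite (eq_sorted (e' := e)) //; move=> x y; rewrite /= esymm.
case/andP: HR => HR1 HR2.
have /andP[H1 H2] := ext_right HR1 HR2 Haua Huav.
have E1 : rev rest ++ [:: v; a; ua] = (rev rest ++ [:: v]) ++ [:: a; ua] by rewrite -catA.
rewrite E1 in H1 H2.
have /andP[H3 H4] := ext_right H1 H2 Hua_wa Hwaa.
have Hsz : size ((rev rest ++ [:: v]) ++ [:: a; ua; wa]) = size rest + 4.
  by rewrite !size_cat size_rev /= -addnA.
move: H3 H4 Hsz; case: ((rev rest ++ [:: v]) ++ [:: a; ua; wa]) => [|x p'] /=; first by move=> _ _; rewrite addn4.
move=> Hp Up; rewrite addn4 => -[Hsz].
have -> : size rest + 3 = size p' by rewrite Hsz addn3.
exists x, (last x p'); exact: dist_upath.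
Qed.

Lemma lb_core a b p : (sdeg e s a <= -2)%R -> (sdeg e s b <= -2)%R ->
  path e a p -> uniq (a :: p) -> last a p = b ->
  exists x y, dist e x y (size p + 4).
Proof.
move=> Ha Hb Hp Up Hl.
case: p Hp Up Hl => [|p0 p1] Hp Up Hl.
  simpl in Hl; subst b.
  have [ub /and3P[Haub Hsub _]] := neg_nb a Ha.
  have [wb /andP[Hubwb Hwba]] := nonleaf Haub Hsub.
  have Hu : uniq ([::] ++ [:: a; ub]).
    rewrite /= inE andbT; apply/eqP => E; move: (eirr a); by rewrite {2}E Haub.
  have Hs0 : sorted e ([::] ++ [:: a; ub]) by rewrite /= Haub.
  have /andP[H1 H2] := ext_right Hs0 Hu Hubwb Hwba.
  exact: (lb_finish Ha H1 H2).
have [s0 [u [t Es]]] : exists s0 u t, a :: p0 :: p1 = s0 ++ [:: u; t].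
  case/lastP E: p1 => [|q tt].
    by exists [::], a, p0.
  case/lastP E2: (p0 :: q) => [//|q2 uu].
  exists (a :: q2), uu, tt; by rewrite -cats1 -cat_cons E2 -cats1 -!catA.
have Ht : t = b.
  by move: Hl; rewrite -[last a (p0 :: p1)]/(last a (a :: p0 :: p1)) Es last_cat.
subst t.
have HS1 : sorted e (s0 ++ [:: u; b]) by rewrite -Es.
have HU1 : uniq (s0 ++ [:: u; b]) by rewrite -Es.
have [ub /and3P[Hbub Hsub Hubu]] := neg_nb u Hb.
have [wb /andP[Hubwb Hwbb]] := nonleaf Hbub Hsub.
have /andP[H1 H2] := ext_right HS1 HU1 Hbub Hubu.
have E1 : s0 ++ [:: u; b; ub] = (s0 ++ [:: u]) ++ [:: b; ub] by rewrite -catA.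
rewrite E1 in H1 H2.
have /andP[H3 H4] := ext_right H1 H2 Hubwb Hwbb.
have E2 : (s0 ++ [:: u]) ++ [:: b; ub; wb] = a :: p0 :: (p1 ++ [:: ub; wb]).
  by rewrite -catA /= -[u :: b :: _]/([:: u; b] ++ [:: ub; wb]) catA -Es.
rewrite E2 in H3 H4.
have [x [y Hd]] := lb_finish Ha H3 H4.
exists x, y; move: Hd; by rewrite size_cat /= arith1.
Qed.


Hypothesis econn : forall x y, connect e x y.

Lemma upath_exists a b : exists p, [/\ path e a p, uniq (a :: p) & last a p = b].
Proof.
case/connectP: (econn a b) => p Hp ->.
case: (shortenP Hp) => p' Hp' Up' _; by exists p'.
Qed.

Lemma far5 a b : a != b -> (sdeg e s a <= -2)%R -> (sdeg e s b <= -2)%R ->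
  exists x y K, dist e x y K /\ 5 <= K.
Proof.
move=> Hab Ha Hb; have [p [Hp Up Hl]] := upath_exists a b.
have [x [y Hd]] := lb_core Ha Hb Hp Up Hl.
exists x, y, (size p + 4); split => //; clear Hd.
by case: p Hp Up Hl => [/= _ _ E|]; [move: Hab; rewrite E eqxx | move=> *; rewrite addn4].
Qed.

Lemma far6 a b : a != b -> ~~ e a b -> (sdeg e s a <= -2)%R -> (sdeg e s b <= -2)%R ->
  exists x y K, dist e x y K /\ 6 <= K.
Proof.
move=> Hab Hnab Ha Hb; have [p [Hp Up Hl]] := upath_exists a b.
have [x [y Hd]] := lb_core Ha Hb Hp Up Hl.
exists x, y, (size p + 4); split => //; clear Hd.
case: p Hp Up Hl => [/= _ _ E|q [|q2 p]].
- by move: Hab; rewrite E eqxx.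
- by move=> /= /andP[Haq _] _ E; move: Hnab; rewrite -E Haq.
- by move=> *; rewrite addn4.
Qed.

Lemma LB_real (ys : seq int) : 1 <= size ys -> uniq ys -> (forall y, y \in ys -> (y < -1)%R) ->
  (forall y, y \in ys -> exists v, sdeg e s v = y) ->
  exists x y K, dist e x y K /\
    (if size ys == 1 then 4 else if size ys == 2 then 5 else 6) <= K.
Proof.
move=> Hm Hu Hlt Hr.
have Hle : forall y, y \in ys -> exists v, (sdeg e s v <= -2)%R /\ sdeg e s v = y.
  move=> y Hy; have [v Hv] := Hr y Hy; exists v; split => //.
  by rewrite Hv; apply: int_lt; apply: Hlt.
case: ys Hm Hu Hlt Hr Hle => [//|y0 [|y1 [|y2 r]]] _ Hu _ _ Hle.
- have [v [Hv _]] := Hle y0 (mem_head _ _).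
  have [x [y Hd]] := @lb_core v v [::] Hv Hv isT isT erefl.
  by exists x, y, 4.
- have [v0 [Hv0 E0]] := Hle y0 (mem_head _ _).
  have [v1 [Hv1 E1]] := Hle y1 ltac:(by rewrite !inE eqxx orbT).
  have Hne : v0 != v1.
    apply/eqP => E; move: Hu; rewrite /= inE -E0 -E1 E eqxx; by [].
  have [x [y [K [Hd HK]]]] := far5 Hne Hv0 Hv1.
  by exists x, y, K.
- have [v0 [Hv0 E0]] := Hle y0 (mem_head _ _).
  have [v1 [Hv1 E1]] := Hle y1 ltac:(by rewrite !inE eqxx orbT).
  have [v2 [Hv2 E2]] := Hle y2 ltac:(by rewrite !inE eqxx !orbT).
  move: Hu; rewrite /= !inE !negb_or => /andP[/and3P[N01 N02 _] /andP[/andP[N12 _] _]].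
  have D01 : v0 != v1 by apply: contraNneq N01 => E; rewrite -E0 -E1 E.
  have D02 : v0 != v2 by apply: contraNneq N02 => E; rewrite -E0 -E2 E.
  have D12 : v1 != v2 by apply: contraNneq N12 => E; rewrite -E1 -E2 E.
  have [K6 HK6] : exists a b, [/\ a != b, ~~ e a b, (sdeg e s a <= -2)%R & (sdeg e s b <= -2)%R].
    case: (boolP (e v0 v1)) => H01; last by exists v0, v1.
    case: (boolP (e v1 v2)) => H12; last by exists v1, v2.
    case: (boolP (e v2 v0)) => H20; last by exists v2, v0; rewrite eq_sym D02.
    exfalso; move: (eacyc (p := [:: v0; v1; v2])).
    rewrite /= !inE !negb_or D01 D02 D12 /= H01 H12 H20.
    by move/(_ isT isT).
  case: HK6 => b [Hab Hnab Ha Hb].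
  have [x [y [K [Hd HK]]]] := far6 Hab Hnab Ha Hb.
  by exists x, y, K.
Qed.

End Gen.
Section Rooted.
Variables (T : finType) (r : T) (par : T -> T) (h : T -> nat) (sg : T -> bool).
Hypothesis hpar : forall x, x != r -> h (par x) < h x.

Definition re x y := ((x != r) && (par x == y)) || ((y != r) && (par y == x)).
Definition rs x y := if (x != r) && (par x == y) then sg x else sg y.

Lemma re_sym x y : re x y = re y x.
Proof. by rewrite /re orbC. Qed.

Lemma par_neq x : x != r -> par x != x.
Proof. by move=> /hpar H; apply/eqP => E; move: H; rewrite E ltnn. Qed.

Lemma re_irr x : ~~ re x x.
Proof.
rewrite /re orbb; apply/negP => /andP[Hx /eqP E].
by move: (par_neq Hx); rewrite E eqxx.
Qed.

Lemma par_par x : x != r -> par x != r -> par (par x) != x.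
Proof.
move=> H1 H2; apply/eqP => E; have := hpar H1; have := hpar H2; rewrite E.
move=> A B; have := ltn_trans A B; by rewrite ltnn.
Qed.

Lemma re_conn_root x : connect re x r.
Proof.
move: {2}(h x) (leqnn (h x)) => n; elim: n x => [|n IH] x Hn.
  case: (eqVneq x r) => [->|Hx]; first exact: connect0.
  by move: (hpar Hx); rewrite ltnNge (leq_trans Hn (leq0n _)).
case: (eqVneq x r) => [->|Hx]; first exact: connect0.
apply: (@connect_trans T re (par x)).
  by apply: connect1; rewrite /re Hx eqxx.
by apply: IH; rewrite -ltnS (leq_trans (hpar Hx) Hn).
Qed.

Lemma re_conn x y : connect re x y.
Proof.
apply: (connect_trans (re_conn_root x)).
by rewrite (sym_connect_sym re_sym) re_conn_root.
Qed.

Lemma re_acyc (p : seq T) : uniq p -> 3 <= size p -> ~~ cycle re p.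
Proof.
case: p => [//|x0 p0] Up Sp; set p := x0 :: p0 in Up Sp *.
have Hx0 : x0 \in p by rewrite mem_head.
case: (@arg_maxnP T x0 (fun u => u \in p) h Hx0) => v Hv Hmax.
case: (rot_to Hv) => i s' Er.
rewrite -(rot_cycle i) Er; rewrite -(rot_uniq i) Er in Up; rewrite -(size_rot i) Er in Sp.
have Hmem : forall u, u \in s' -> u \in p.
  by move=> u Hu; rewrite -(mem_rot i) Er inE Hu orbT.
have Key : forall u, u \in s' -> re v u -> (v != r) && (par v == u).
  move=> u Hu; rewrite /re => /orP[//|/andP[Hur /eqP Hpu]].
  have := Hmax u (Hmem u Hu); have := hpar Hur; rewrite Hpu.
  by move=> A B; move: (leq_trans A B); rewrite ltnn.
case: s' Up Sp Hmem Key Er => [//|w [//|w2 s'']] Up Sp Hmem Key Er.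
rewrite /= rcons_path; apply/negP => /andP[Hvw /andP[_ Hlv]].
case/andP: Hlv => _ Hlv; rewrite re_sym in Hlv.
have Hl : last w2 s'' \in w :: w2 :: s'' by rewrite inE mem_last orbT.
have /andP[_ /eqP E1] := Key w (mem_head _ _) Hvw.
have /andP[_ /eqP E2] := Key _ Hl Hlv.
move: Up; rewrite /= inE => /andP[/norP[_ Hvs] /andP[Hw _]].
by move: Hw; rewrite -E1 E2 mem_last.
Qed.

Lemma rs_sym : is_signing re rs.
Proof.
move=> x y; rewrite /re /rs => /orP[/andP[Hx /eqP E]|/andP[Hy /eqP E]].
  subst y; rewrite Hx eqxx /=.
  case: (eqVneq (par x) r) => //= Hp.
  by rewrite (negbTE (par_par Hx Hp)).
subst x; rewrite Hy eqxx /=.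
case: (eqVneq (par y) r) => //= Hp.
by rewrite (negbTE (par_par Hy Hp)).
Qed.

Lemma card_re v (b : bool) :
  #|[pred u | re v u && (rs v u == b)]| =
  ((v != r) && (sg v == b)) + #|[pred u | (u != r) && (par u == v) && (sg u == b)]|.
Proof.
case: (eqVneq v r) => Hv /=.
  subst v; apply: eq_card => u; rewrite !inE /re /rs eqxx /=.
  by case: (u != r) => //=.
rewrite (cardD1 (par v)) !inE /re /rs (negbTE Hv) eqxx /=; congr (_ + _).
apply: eq_card => u; rewrite !inE /=.
case: (eqVneq u (par v)) => [->|Hu] /=.
  case: (eqVneq (par v) r) => //= Hp.
  by rewrite (negbTE (par_par Hv Hp)).
by [].
Qed.

Lemma sdeg_re v : sdeg re rs v =
  ((((v != r) && sg v) + #|[pred u | (u != r) && (par u == v) && sg u]|)%:Z -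
   (((v != r) && ~~ sg v) + #|[pred u | (u != r) && (par u == v) && ~~ sg u]|)%:Z)%R.
Proof.
rewrite /sdeg.
have E1 := card_re v true; have E2 := card_re v false.
have F : forall b : bool, (b == true) = b by case.
have G : forall b : bool, (b == false) = ~~ b by case.
rewrite (eq_card (B := [pred u | re v u && (rs v u == true)])); last by move=> u; rewrite !inE F.
rewrite (eq_card (A := [pred u | re v u && ~~ rs v u]) (B := [pred u | re v u && (rs v u == false)])); last by move=> u; rewrite !inE G.
rewrite E1 E2 F G.
congr (_ - _)%R; congr Posz; congr (_ + _); apply: eq_card => u; by rewrite !inE ?F ?G.
Qed.

Lemma sdeg_re2 v : sdeg re rs v =
  ((((v != r) && (sg v == true)) + #|[pred u | (u != r) && (par u == v) && (sg u == true)]|)%:Z -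
   (((v != r) && (sg v == false)) + #|[pred u | (u != r) && (par u == v) && (sg u == false)]|)%:Z)%R.
Proof.
rewrite /sdeg -(card_re v true) -(card_re v false).
have F : forall b : bool, (b == true) = b by case.
have G : forall b : bool, (b == false) = ~~ b by case.
by congr (_ - _)%R; congr Posz; apply: eq_card => u; rewrite !inE ?F ?G.
Qed.

Lemma walk_par x : x != r -> has_walk re x (par x) 1.
Proof. by move=> Hx; exists [:: par x]; rewrite /= /re Hx eqxx. Qed.

Lemma walk0 x : has_walk re x x 0.
Proof. by exists [::]. Qed.

Lemma walk_cat x y z k l : has_walk re x y k -> has_walk re y z l -> has_walk re x z (k + l).
Proof.
move=> [p [Hp Lp Sp]] [q [Hq Lq Sq]]; exists (p ++ q).
by rewrite cat_path last_cat Lp Hp Hq size_cat Sp Sq.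
Qed.

Lemma walk_rev x y k : has_walk re x y k -> has_walk re y x k.
Proof.
move=> [p [Hp Lp Sp]]; exists (rev (belast x p)); split.
- rewrite -Lp rev_path; by rewrite (eq_path (e' := re)) // => a b; rewrite /= re_sym.
- by case: p Hp Lp Sp => [//= _ -> //|a p] _ _ _; rewrite /= rev_cons last_rcons.
- by rewrite size_rev size_belast.
Qed.

Lemma dist_le x y k j : dist re x y k -> has_walk re x y j -> k <= j.
Proof. by move=> [_ H] /H. Qed.

End Rooted.

Lemma card_bij (A B : finType) (f : A -> B) (P : pred A) (Q : pred B) :
  injective f -> (forall x, Q (f x) = P x) -> (forall u, Q u -> exists x, u = f x) ->
  #|Q| = #|P|.
Proof.
move=> Hf HQ Hu; rewrite -(card_image Hf P); apply: eq_card => u.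
apply/idP/idP.
  move=> Qu; have [x Ex] := Hu u Qu; subst u; apply: map_f.
  by rewrite mem_enum unfold_in /= -HQ.
by case/imageP => x Px ->; rewrite unfold_in /= HQ.
Qed.

Lemma card_const (n : nat) (b : bool) : #|[pred j : 'I_n | b]| = if b then n else 0.
Proof.
case: b.
  by rewrite -[RHS](card_ord n); apply: eq_card.
by apply: eq_card0.
Qed.

Definition kind := (nat * nat)%type.
Definition ka (k : kind) := if k.1 == 1 then k.2.+1 else if k.1 == 2 then k.2.-1 else 0.
Definition kb (k : kind) := if k.1 == 2 then 2 else 0.

Section Concrete.
Variable Ls : seq kind.
Local Notation c := (size Ls).
Definition kd (i : 'I_c) := nth (0, 0) Ls i.
Definition av (i : 'I_c) := ka (kd i).
Definition bv (i : 'I_c) := kb (kd i).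
Definition GC := {i : 'I_c & 'I_(av i)}.
Definition GGC := {i : 'I_c & ('I_(av i) * 'I_(bv i))%type}.
Definition V := (unit + ('I_c + (GC + GGC)))%type.
Definition vroot : V := inl tt.
Definition vch i : V := inr (inl i).
Definition vgc i (j : 'I_(av i)) : V := inr (inr (inl (existT _ i j))).
Definition vggc i (j : 'I_(av i)) (l : 'I_(bv i)) : V := inr (inr (inr (existT _ i (j, l)))).

Definition vpar (u : V) : V :=
  match u with
  | inl _ => vroot
  | inr (inl _) => vroot
  | inr (inr (inl (existT i j))) => vch i
  | inr (inr (inr (existT i (j, l)))) => vgc j
  end.
Definition vh (u : V) : nat :=
  match u with
  | inl _ => 0
  | inr (inl _) => 1
  | inr (inr (inl _)) => 2
  | inr (inr (inr _)) => 3
  end.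
Definition chsg (i : 'I_c) := (kd i).1 == 0.
Definition gcsg (i : 'I_c) := (kd i).1 == 1.
Definition vsg (u : V) : bool :=
  match u with
  | inl _ => true
  | inr (inl i) => chsg i
  | inr (inr (inl (existT i j))) => gcsg i
  | inr (inr (inr _)) => true
  end.

Lemma vhpar u : u != vroot -> vh (vpar u) < vh u.
Proof. by case: u => [[]|[i|[[i j]|[i [j l]]]]]. Qed.

Definition ve := re vroot vpar.
Definition vs := rs vroot vpar vsg.

Lemma v_tree : is_tree ve.
Proof.
split.
- by exists vroot.
- exact: re_sym.
- exact: (re_irr vhpar).
- exact: (re_conn vhpar).
- exact: (re_acyc vhpar).
Qed.

Lemma v_sign : is_signing ve vs.
Proof. exact: (rs_sym vsg vhpar). Qed.

Lemma vch_inj : injective vch.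
Proof. by move=> i j [E]. Qed.

Lemma vgc_inj i : injective (@vgc i).
Proof.
move=> j1 j2 [E]; exact: (Eqdep_dec.inj_pair2_eq_dec _ (@eq_comparable _) _ _ _ _ E).
Qed.


Lemma cnt_root b : #|[pred u | (u != vroot) && (vpar u == vroot) && (vsg u == b)]| =
  #|[pred i : 'I_c | chsg i == b]|.
Proof.
apply: (card_bij (f := vch)); first exact: vch_inj.
  by [].
by case=> [[]|[i|[[i j]|[i [j l]]]]] //= _; exists i.
Qed.

Lemma cnt_ch i0 b : #|[pred u | (u != vroot) && (vpar u == vch i0) && (vsg u == b)]| =
  if gcsg i0 == b then av i0 else 0.
Proof.
rewrite -card_const; apply: (card_bij (f := @vgc i0)); first exact: vgc_inj.
  by move=> j; rewrite /= eqxx.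
case=> [[]|[i|[[i j]|[i [j l]]]]] //=.
move=> /andP[/eqP [E] _]; subst i; by exists j.
Qed.

Lemma vggc_inj i j : injective (@vggc i j).
Proof.
move=> l1 l2 [E]; have := Eqdep_dec.inj_pair2_eq_dec _ (@eq_comparable _) _ _ _ _ E.
by move=> [].
Qed.

Lemma cnt_gc i0 (j0 : 'I_(av i0)) b :
  #|[pred u | (u != vroot) && (vpar u == vgc j0) && (vsg u == b)]| =
  if b then bv i0 else 0.
Proof.
rewrite -card_const; apply: (card_bij (f := @vggc i0 j0)); first exact: vggc_inj.
  by move=> l; rewrite /= eqxx; case: b.
case=> [[]|[i|[[i j]|[i [j l]]]]] //=.
move=> /andP[/eqP E Hb].
have Ei : i = i0 by case: E.
subst i; have Ej : j = j0 by apply: vgc_inj.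
by subst j; exists l.
Qed.

Lemma cnt_ggc i0 (j0 : 'I_(av i0)) (l0 : 'I_(bv i0)) b :
  #|[pred u | (u != vroot) && (vpar u == vggc j0 l0) && (vsg u == b)]| = 0.
Proof.
apply: eq_card0; case=> [[]|[i|[[i j]|[i [j l]]]]] //=.
Qed.

Lemma sdeg_root : sdeg ve vs vroot =
  (#|[pred i : 'I_c | chsg i == true]|%:Z - #|[pred i : 'I_c | chsg i == false]|%:Z)%R.
Proof. by rewrite /ve /vs (sdeg_re2 vsg vhpar) // !cnt_root. Qed.

Lemma sdeg_ch i : sdeg ve vs (vch i) =
  (((chsg i == true) + (if gcsg i == true then av i else 0))%:Z -
   ((chsg i == false) + (if gcsg i == false then av i else 0))%:Z)%R.
Proof. by rewrite /ve /vs (sdeg_re2 vsg vhpar) // !cnt_ch. Qed.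

Lemma sdeg_gc i (j : 'I_(av i)) : sdeg ve vs (vgc j) =
  (((gcsg i == true) + bv i)%:Z - ((gcsg i == false) + 0)%:Z)%R.
Proof. by rewrite /ve /vs (sdeg_re2 vsg vhpar) // !cnt_gc. Qed.

Lemma sdeg_ggc i (j : 'I_(av i)) (l : 'I_(bv i)) : sdeg ve vs (vggc j l) = 1%R.
Proof. by rewrite /ve /vs (sdeg_re2 vsg vhpar) // !cnt_ggc. Qed.

End Concrete.

Definition bound (m : nat) := if m == 1 then 4 else if m == 2 then 5 else 6.

Lemma diam_from (D' : int -> Prop) (ys : seq int) :
  1 <= size ys -> uniq ys -> (forall y, y \in ys -> (y < -1)%R) ->
  (forall y, y \in ys -> D' y) -> ~ D' (-1)%R ->
  (exists (T : finType) (e : rel T) (s : T -> T -> bool),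
     [/\ is_tree e, is_signing e s, realizes e s D' &
         forall x y k, dist e x y k -> k <= bound (size ys)]) ->
  diamD D' (bound (size ys)).
Proof.
move=> Hm Hu Hlt HD Hn1 [T [e [s [Ht Hs Hr Hub]]]].
have LB : forall (T : finType) (e : rel T) (s : T -> T -> bool),
    is_tree e -> is_signing e s -> realizes e s D' ->
    exists x y K, dist e x y K /\ bound (size ys) <= K.
  move=> T' e' s' [_ H1 H2 H3 H4] Hs' [Hr1 Hr2].
  apply: (LB_real H1 H2 H4 Hs') => //.
  - move=> u; apply/eqP => E; apply: Hn1; rewrite -E; exact: Hr1.
  - move=> y Hy; exact: (Hr2 y (HD y Hy)).
split.
  exists T, e, s; split => //; split => //.
  have [x [y [K [Hd HK]]]] := LB T e s Ht Hs Hr.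
  have HK2 := Hub x y K Hd.
  exists x, y; suff -> : bound (size ys) = K by [].
  by apply/eqP; rewrite eqn_leq HK HK2.
move=> T' e' s' d' Ht' Hs' Hr' [_ Hd'].
have [x [y [K [Hd HK]]]] := LB T' e' s' Ht' Hs' Hr'.
exact: (leq_trans HK (Hd' x y K Hd)).
Qed.

Lemma abs_neg (y : int) : (y < -1)%R -> y = (- Posz (absz y))%R /\ (2 <= absz y)%N.
Proof. move=> H; split; lia. Qed.
Lemma abs_pos (x : int) : (1 < x)%R -> x = Posz (absz x).
Proof. lia. Qed.

Lemma card_kd (Ls : seq kind) (P : pred kind) :
  #|[pred i : 'I_(size Ls) | P (kd i)]| = count P Ls.
Proof.
rewrite cardE /enum_mem size_filter /=.
rewrite -enumT.
transitivity (count (fun n => P (nth (0,0) Ls n)) (map val (enum 'I_(size Ls)))).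
  by rewrite count_map; apply: eq_count => i; rewrite !inE.
by rewrite val_enum_ord -[in RHS](mkseq_nth (0,0) Ls) /mkseq count_map.
Qed.

Lemma mem_kd (Ls : seq kind) k : k \in Ls -> exists i : 'I_(size Ls), kd i = k.
Proof.
move=> Hk; have Hi : index k Ls < size Ls by rewrite index_mem.
by exists (Ordinal Hi); rewrite /kd /= nth_index.
Qed.

Lemma int_arith1 a b : a <= b -> (Posz (b - a) - Posz b)%R = (- Posz a)%R.
Proof. lia. Qed.
Lemma int_arith2 n : 1 <= n -> (Posz (0 + 0) - Posz (1 + n.-1))%R = (- Posz n)%R.
Proof. lia. Qed.
Lemma int_arith3 z : (Posz (0 + z.+1) - Posz (1 + 0))%R = Posz z.
Proof. lia. Qed.

Lemma mem_head_behead (s : seq int) d : d \in s -> d = head 0%R s \/ d \in behead s.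
Proof. by case: s => // a s; rewrite inE => /orP[/eqP ->|H]; [left|right]. Qed.

Definition kval (k : kind) : int :=
  if k.1 == 0 then 1%R else if k.1 == 1 then Posz k.2 else (- Posz k.2)%R.

Section Build.
Variables (ys xs : seq int) (zf : bool).
Hypothesis hm : 1 <= size ys.
Hypothesis hy : forall y, y \in ys -> (y < -1)%R.
Hypothesis hx : forall x, x \in xs -> (1 < x)%R.

Definition Yv := absz (head 0%R ys).
Definition base : seq kind := [seq (2, absz y) | y <- behead ys] ++
  [seq (1, absz x) | x <- xs] ++ (if zf then [:: (1,0)] else [::]).
Definition nl := maxn Yv (size base).
Definition Ls := base ++ nseq (nl - size base) (1,1) ++ nseq (nl - Yv) (0,0).
Definition Dz (w : int) : Prop := (w = 1%R \/ w \in ys \/ w \in xs) \/ (zf /\ w = 0%R).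

Lemma memLs k : k \in Ls -> k = (0,0) \/ k = (1,1) \/
  (exists2 y, y \in behead ys & k = (2, absz y)) \/
  (exists2 x, x \in xs & k = (1, absz x)) \/ (zf /\ k = (1,0)).
Proof.
rewrite /Ls /base !mem_cat => /orP[/orP[|/orP[]]|/orP[]].
- by move/mapP => [y Hy ->]; right; right; left; exists y.
- by move/mapP => [x Hx ->]; right; right; right; left; exists x.
- by case: zf => //; rewrite inE => /eqP ->; right; right; right; right.
- by rewrite mem_nseq => /andP[_ /eqP ->]; by right; left.
- by rewrite mem_nseq => /andP[_ /eqP ->]; by left.
Qed.

Lemma count0 : count (fun k : kind => (k.1 == 0) == true) Ls = nl - Yv.
Proof.
rewrite /Ls /base !count_cat !count_map !count_nseq /=.
rewrite (eq_count (a2 := pred0)) // count_pred0.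
rewrite (eq_count (a2 := pred0)) // count_pred0.
by case: zf => /=; rewrite mul1n.
Qed.

Lemma countN0 : count (fun k : kind => (k.1 == 0) == false) Ls = nl.
Proof.
rewrite /Ls /base !count_cat !count_map !count_nseq /=.
rewrite (eq_count (a2 := predT)) // count_predT.
rewrite (eq_count (a2 := predT)) // count_predT.
rewrite ?mul1n ?muln0 ?mul0n ?addn0.
have : size base <= nl by rewrite leq_maxr.
rewrite /base !size_cat !size_map; case: zf => /=; lia.
Qed.

Lemma kd_mem (i : 'I_(size Ls)) : kd i \in Ls.
Proof. by rewrite /kd mem_nth. Qed.

Lemma head_in : head 0%R ys \in ys.
Proof. by move: hm; case: ys => // a s _; rewrite mem_head. Qed.

Lemma Yv2 : 2 <= Yv.
Proof. by have [_ H] := abs_neg (hy head_in). Qed.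

Lemma sdeg_root_val : sdeg (@ve Ls) (@vs Ls) (@vroot Ls) = head 0%R ys.
Proof.
rewrite sdeg_root.
have E1 : #|[pred i : 'I_(size Ls) | chsg i == true]| = nl - Yv.
  by rewrite -count0 -card_kd; apply: eq_card.
have E2 : #|[pred i : 'I_(size Ls) | chsg i == false]| = nl.
  by rewrite -countN0 -card_kd; apply: eq_card.
rewrite E1 E2 int_arith1 ?leq_maxl //.
by have [E _] := abs_neg (hy head_in); rewrite [RHS]E.
Qed.

Lemma sdeg_ch_val i : sdeg (@ve Ls) (@vs Ls) (vch i) = kval (kd i).
Proof.
rewrite sdeg_ch /chsg /gcsg /av.
have := memLs (kd_mem i); move: (kd i) => k.
case=> [->|[->|[[y Hy ->]|[[x Hx ->]|[_ ->]]]]] /=.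
- by [].
- by [].
- have [_ H2] := abs_neg (hy (mem_behead Hy)).
  by rewrite /kval /= int_arith2 // (leq_trans _ H2).
- by rewrite /kval /= int_arith3.
- by [].
Qed.

Lemma sdeg_gc_val i (j : 'I_(av i)) : sdeg (@ve Ls) (@vs Ls) (vgc j) = 1%R.
Proof.
rewrite sdeg_gc /gcsg /bv.
have Hj : 0 < ka (kd i) by apply: leq_ltn_trans (ltn_ord j).
move: Hj (memLs (kd_mem i)); clear j; move: (kd i) => k.
by move=> Hk [E|[->|[[y Hy ->]|[[x Hx ->]|[_ ->]]]]]; first (by rewrite E in Hk).
Qed.

Lemma Dz_kval k : k \in Ls -> Dz (kval k).
Proof.
case/memLs => [->|[->|[[y Hy ->]|[[x Hx ->]|[Hz ->]]]]].
- by left; left.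
- by left; left.
- have [E _] := abs_neg (hy (mem_behead Hy)).
  by rewrite /kval /= -E; left; right; left; exact: mem_behead.
- by rewrite /kval /= -(abs_pos (hx Hx)); left; right; right.
- by right.
Qed.

Lemma nl_pos : 0 < nl.
Proof. by rewrite /nl (leq_trans _ (leq_maxl _ _)) // (leq_trans _ Yv2). Qed.

Lemma realize_all : realizes (@ve Ls) (@vs Ls) Dz.
Proof.
split.
- case=> [[]|[i|[[i j]|[i [j l]]]]].
  + have := sdeg_root_val; rewrite /vroot => ->; left; right; left; exact: head_in.
  + have := sdeg_ch_val i; rewrite /vch => ->; apply: Dz_kval; exact: kd_mem.
  + have := sdeg_gc_val j; rewrite /vgc => ->; by left; left.
  + have := sdeg_ggc j l; rewrite /vggc => ->; by left; left.
- move=> d [[E|[Hd|Hd]]|[Hz E]].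
  + subst d.
    have : has (fun k : kind => (k.1 == 0) == false) Ls by rewrite has_count countN0 nl_pos.
    case/hasP => k Hk Hk0; have [i Ei] := mem_kd Hk.
    have Hpos : 0 < av i.
      rewrite /av Ei; move: Hk0; case/memLs: Hk => [->|[->|[[y Hy ->]|[[x Hx ->]|[_ ->]]]]] //=.
      have [_ H2] := abs_neg (hy (mem_behead Hy)).
      by move=> _; rewrite -ltnS prednK // (leq_trans _ H2).
    by exists (vgc (Ordinal Hpos)); rewrite sdeg_gc_val.
  + case/mem_head_behead: Hd => [->|Hd].
      by exists (vroot Ls); rewrite sdeg_root_val.
    have Hk : (2, absz d) \in Ls by rewrite /Ls /base !mem_cat map_f.
    have [i Ei] := mem_kd Hk; exists (vch i); rewrite sdeg_ch_val Ei /kval /=.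
    by have [E _] := abs_neg (hy (mem_behead Hd)).
  + have Hk : (1, absz d) \in Ls by rewrite /Ls /base !mem_cat map_f ?orbT.
    have [i Ei] := mem_kd Hk; exists (vch i); rewrite sdeg_ch_val Ei /kval /=.
    by rewrite -(abs_pos (hx Hd)).
  + have Hk : (1, 0) \in Ls by rewrite /Ls /base !mem_cat Hz inE eqxx !orbT.
    by have [i Ei] := mem_kd Hk; exists (vch i); rewrite sdeg_ch_val Ei E.
Qed.

Lemma walk_root (u : V Ls) : has_walk (@ve Ls) u (vroot Ls) (vh u).
Proof.
case: u => [[]|[i|[[i j]|[i [j l]]]]].
- exact: walk0.
- exact: (@walk_par _ (vroot Ls) (@vpar Ls) (vch i) isT).
- exact: (walk_cat (@walk_par _ (vroot Ls) (@vpar Ls) (vgc j) isT)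
                   (@walk_par _ (vroot Ls) (@vpar Ls) (vch i) isT)).
- exact: (walk_cat (walk_cat (@walk_par _ (vroot Ls) (@vpar Ls) (vggc j l) isT)
                   (@walk_par _ (vroot Ls) (@vpar Ls) (vgc j) isT))
                   (@walk_par _ (vroot Ls) (@vpar Ls) (vch i) isT)).
Qed.

Lemma walk_up2 i (j : 'I_(av i)) (l : 'I_(bv i)) : has_walk (@ve Ls) (vggc j l) (vch i) 2.
Proof.
exact: (walk_cat (@walk_par _ (vroot Ls) (@vpar Ls) (vggc j l) isT)
                   (@walk_par _ (vroot Ls) (@vpar Ls) (vgc j) isT)).
Qed.

Lemma walk_pair (u v : V Ls) : has_walk (@ve Ls) u v (vh u + vh v).
Proof. exact: walk_cat (walk_root u) (walk_rev (walk_root v)). Qed.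

Lemma vh3 (u : V Ls) : vh u <= 3.
Proof. by case: u => [[]|[i|[[i j]|[i [j l]]]]]. Qed.

Lemma bv_pos (i : 'I_(size Ls)) : 0 < bv i -> (kd i).1 == 2.
Proof. by rewrite /bv /kb; case: ((kd i).1 == 2). Qed.

Lemma vh2_m1 (u : V Ls) : size ys = 1 -> vh u <= 2.
Proof.
move=> Hs; case: u => [[]|[i|[[i j]|[i [j l]]]]] //.
have : 0 < bv i by apply: leq_ltn_trans (ltn_ord l).
move/bv_pos; case/memLs: (kd_mem i) => [->|[->|[[y Hy ->]|[[x Hx ->]|[_ ->]]]]] //.
by move: Hy; case: ys Hs => [|a [|b r]].
Qed.

Lemma idx2 (i : 'I_(size Ls)) : size ys = 2 -> (kd i).1 == 2 -> val i = 0.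
Proof.
move=> Hs; have Hb : behead ys = [:: nth 0%R ys 1] by case: ys Hs => [|a [|b [|]]].
case: i => [[|n] Hn] //=.
rewrite /kd /= /Ls /base Hb /= => H; exfalso; move: H.
set rest := (_ ++ _ ++ _).
have Hin : nth (0, 0) rest n \in rest.
  by apply: mem_nth; move: Hn; rewrite /Ls /base Hb /=.
move: (nth (0, 0) rest n) Hin => k.
rewrite /rest !mem_cat => /or3P[/orP[/mapP [x _ ->]|]||] //.
- by case: zf => //; rewrite inE => /eqP ->.
- by rewrite mem_nseq => /andP[_ /eqP ->].
- by rewrite mem_nseq => /andP[_ /eqP ->].
Qed.

Lemma ub_all x y k : dist (@ve Ls) x y k -> k <= bound (size ys).
Proof.
move=> Hd; have Hk := dist_le Hd (walk_pair x y).
rewrite /bound; case: ifP => [/eqP H1|_].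
  by apply: (leq_trans Hk); rewrite -[4]/(2 + 2) leq_add // vh2_m1.
case: ifP => [/eqP H2|_]; last first.
  by apply: (leq_trans Hk); rewrite -[6]/(3 + 3) leq_add // vh3.
case: x Hd Hk => [[]|[i|[[i j]|[i [j l]]]]] Hd Hk;
  try (by apply: (leq_trans Hk); rewrite -[5]/(2 + 3) leq_add // vh3).
case: y Hd Hk => [[]|[i2|[[i2 j2]|[i2 [j2 l2]]]]] Hd Hk;
  try (by apply: (leq_trans Hk); rewrite -[5]/(3 + 2) leq_add // vh3).
have Ei : i = i2.
  apply: val_inj; rewrite (idx2 H2 (bv_pos (leq_ltn_trans (leq0n _) (ltn_ord l)))).
  by rewrite (idx2 H2 (bv_pos (leq_ltn_trans (leq0n _) (ltn_ord l2)))).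
subst i2.
exact: leq_trans (dist_le Hd (walk_cat (walk_up2 j l) (walk_rev (walk_up2 j2 l2)))) _.
Qed.
End Build.

Lemma realizes_iff (T : finType) (e : rel T) (s : T -> T -> bool) (D1 D2 : int -> Prop) :
  (forall w, D1 w <-> D2 w) -> realizes e s D1 -> realizes e s D2.
Proof.
move=> H [H1 H2]; split; first by move=> v; apply/H.
by move=> d /H /H2.
Qed.

Unset Implicit Arguments.

Theorem mainTheorem6 (ys xs : seq int)
  (hm : (1 <= size ys)%N)
  (hyu : uniq ys) (hy : forall y, y \in ys -> (y < -1)%R)
  (hxu : uniq xs) (hx : forall x, x \in xs -> (1 < x)%R) :
  let D := fun z : int => z = 1%R \/ z \in ys \/ z \in xs in
  let d := if size ys == 1%N then 4%N else if size ys == 2%N then 5%N else 6%N in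
  diamD D d /\ diamD (fun z => D z \/ z = 0%R) d.
Proof.
move=> D d.
have Hn1 : ~ D (-1)%R.
  move=> [E|[H|H]] //.
  - by move: (hy _ H); rewrite ltxx.
  - by move: (hx _ H).
have Hc : forall zf : bool, exists (T : finType) (e : rel T) (s : T -> T -> bool),
     [/\ is_tree e, is_signing e s, realizes e s (Dz ys xs zf) &
         forall x y k, dist e x y k -> k <= bound (size ys)].
  move=> zf; exists (V (Ls ys xs zf)), (@ve (Ls ys xs zf)), (@vs (Ls ys xs zf)); split.
  - exact: v_tree.
  - exact: v_sign.
  - exact: realize_all.
  - move=> x y k; exact: ub_all.
split.
- apply: (@diam_from D ys hm hyu hy) => //.
    by move=> y Hy; right; left.
  have [T [e [s [H1 H2 H3 H4]]]] := Hc false.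
  exists T, e, s; split => //; apply: realizes_iff H3 => w.
  by rewrite /Dz /D; split => [[//|[]]|H]; [|left].
- apply: (@diam_from (fun z => D z \/ z = 0%R) ys hm hyu hy) => //.
  + by move=> y Hy; left; right; left.
  + by move=> [//|]; rewrite -[(-1)%R]/(Negz 0).
  have [T [e [s [H1 H2 H3 H4]]]] := Hc true.
  exists T, e, s; split => //; apply: realizes_iff H3 => w.
  by rewrite /Dz /D; split => [[H|[_ H]]|[H|H]]; [left|right|left|right].
Qed.
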